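(* Let $p$ be a prime, $R=\mathbb{F}_p[x,x^{-1}]$, $n\ge1$. Let $U$ and $U_m$ ($m\ge1$) be $R$-submodules of $R^n$ with $U\subset U_m$ and ${\rm rk}(U)={\rm rk}(U_m)$ for all $m$, and suppose $U_m\to U$. Then $U_m=U$ for all sufficiently large $m$.
   Context: The rank ${\rm rk}$ of a finitely generated $R$-module is the maximal number of elements freely generating a free submodule ($0$ if none). Convergence $U_m\to U$ of subsets of $R^n$ means that for every $v\in R^n$, the truth value of $v\in U_m$ is eventually equal to that of $v\in U$. *)

(* Defs.v *)
From HB Require Import structures.
From mathcomp Require Import all_boot all_order all_algebra.
From mathcomp Require Import boolp.
Set Implicit Arguments. Unset Strict Implicit. Unset Printing Implicit Defensive.
Import GRing.Theory.
Local Open Scope ring_scope.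

(* R = F_p[x, x^{-1}] is realised as the subring of the fraction field
   K = F_p(x) of {poly 'F_p} consisting of the elements g / x^k. *)
Definition Kfrac (p : nat) := {fraction {poly 'F_p}}.
Notation "x %:F" := (@FracField.tofrac _ x) : ring_scope.

Definition laurent (p : nat) (f : Kfrac p) : Prop :=
  exists (g : {poly 'F_p}) (k : nat), f = g%:F / ('X ^+ k)%:F.

Definition laurent_vec (p n : nat) (v : 'rV[Kfrac p]_n) : Prop :=
  forall i, laurent (v 0 i).

Definition is_submodule (p n : nat) (U : 'rV[Kfrac p]_n -> Prop) : Prop :=
  [/\ forall v, U v -> laurent_vec v,
      U 0,
      forall u v, U u -> U v -> U (u + v)
    & forall (r : Kfrac p) v, laurent r -> U v -> U (r *: v)].

Definition free_family_in (p n : nat) (U : 'rV[Kfrac p]_n -> Prop) (k : nat)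
  : Prop :=
  exists v : 'I_k -> 'rV[Kfrac p]_n,
    (forall i, U (v i)) /\
    (forall c : 'I_k -> Kfrac p, (forall i, laurent (c i)) ->
        \sum_(i < k) c i *: v i = 0 -> forall i, c i = 0).

(* rank: the maximal number of elements of U freely generating a free
   submodule (0 if none).  Any R-independent family in R^n has at most n
   elements, so the maximum is taken over k <= n. *)
Definition rk (p n : nat) (U : 'rV[Kfrac p]_n -> Prop) : nat :=
  \max_(k < n.+1 | `[< free_family_in U k >]) k.

Definition converges (p n : nat) (Um : nat -> 'rV[Kfrac p]_n -> Prop)
  (U : 'rV[Kfrac p]_n -> Prop) : Prop :=
  forall v, laurent_vec v -> exists M, forall m, (M <= m)%N -> (Um m v <-> U v).

(* Main.v *)
Require Import Defs.
From HB Require Import structures.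
From mathcomp Require Import all_boot all_order all_algebra.
From mathcomp Require Import boolp.
From mathcomp Require Import ring.
Set Implicit Arguments. Unset Strict Implicit. Unset Printing Implicit Defensive.
Import GRing.Theory.
Local Open Scope ring_scope.
Local Open Scope quotient_scope.

Lemma frac_repr (R : idomainType) (x : {fraction R}) :
  exists a b : R, b != 0 /\ x = (FracField.tofrac a) / (FracField.tofrac b).
Proof.
exists (repr x).1, (repr x).2; split; first exact: denom_ratioP.
rewrite -[x in LHS]reprK.
set r := repr x.
have -> : (FracField.tofrac r.1) / (FracField.tofrac r.2) = 
   FracField.mul (FracField.tofrac r.1) (FracField.inv (FracField.tofrac r.2)) by [].
rewrite !piE.
apply/eqmodP; rewrite /= FracField.equivfE /FracField.mulf /FracField.invf.
by rewrite !numden_Ratio ?oner_neq0 ?mul1r ?mulr1 ?(denom_ratioP r) // mulrC.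
Qed.

Lemma frac_step (R : idomainType) (g X Q H Rm T : R) : X != 0 ->
  g = X * (Q * H + Rm) + H * T ->
  (FracField.tofrac g) / (FracField.tofrac X) =
  (FracField.tofrac Rm) + (FracField.tofrac H) *
     ((FracField.tofrac T) / (FracField.tofrac X) + FracField.tofrac Q).
Proof.
move=> nX ->; rewrite tofracD !tofracM tofracD tofracM.
have nX' : FracField.tofrac X != 0 by rewrite tofrac_eq0.
field. exact: nX'.
Qed.

Section Laurent.
Variable p : nat.
Local Notation K := (Kfrac p).
Local Notation P := {poly 'F_p}.

Lemma tofracX_neq0 k : (('X : P) ^+ k)%:F != 0 :> K.
Proof. by rewrite tofrac_eq0 expf_neq0 // polyX_eq0. Qed.

Lemma laurent_poly (g : P) : laurent (g%:F : K).
Proof. by exists g, 0%N; rewrite expr0 tofrac1 divr1. Qed.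

Lemma laurent0 : laurent (0 : K).
Proof. by have := laurent_poly 0; rewrite tofrac0. Qed.

Lemma laurent1 : laurent (1 : K).
Proof. by have := laurent_poly 1; rewrite tofrac1. Qed.

Lemma laurentD (a b : K) : laurent a -> laurent b -> laurent (a + b).
Proof.
move=> [g [k ->]] [g' [k' ->]].
exists (g * 'X^k' + g' * 'X^k), (k + k')%N.
have h1 : (('X : P)^+k)%:F != 0 :> K by exact: tofracX_neq0.
have h2 : (('X : P)^+k')%:F != 0 :> K by exact: tofracX_neq0.
rewrite addf_div; [|exact: h1|exact: h2].
rewrite tofracD !tofracM exprD tofracM.
reflexivity.
Qed.

Lemma laurentM (a b : K) : laurent a -> laurent b -> laurent (a * b).
Proof.
move=> [g [k ->]] [g' [k' ->]].
exists (g * g'), (k + k')%N.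
rewrite mulf_div exprD !tofracM.
reflexivity.
Qed.

Lemma laurentN (a : K) : laurent a -> laurent (- a).
Proof.
move=> [g [k ->]]; exists (- g), k; rewrite tofracN mulNr; reflexivity.
Qed.

Lemma laurentB (a b : K) : laurent a -> laurent b -> laurent (a - b).
Proof. move=> ha hb; apply: laurentD; [exact: ha | exact: laurentN]. Qed.

Lemma laurentXV k : laurent (((('X : P) ^+ k)%:F)^-1 : K).
Proof. exists 1, k; rewrite tofrac1 mul1r; reflexivity. Qed.

Lemma laurent_sum (I : Type) (r : seq I) (Pr : pred I) (F : I -> K) :
  (forall i, Pr i -> laurent (F i)) -> laurent (\sum_(i <- r | Pr i) F i).
Proof.
move=> hF; elim/big_ind: _; [exact: laurent0 | exact: laurentD | exact: hF].
Qed.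


Lemma denom1 (k : K) : exists d : P, d != 0 /\ laurent (d%:F * k).
Proof.
have [a [b [nb ->]]] := frac_repr k.
exists b; split; first exact: nb.
have nb' : b%:F != 0 :> K by rewrite tofrac_eq0.
rewrite mulrC divfK; [exact: laurent_poly | exact: nb'].
Qed.

Lemma denomF (I : finType) (c : I -> K) :
  exists d : P, d != 0 /\ forall i, laurent (d%:F * c i).
Proof.
have [D hD] := fin_all_exists (fun i => denom1 (c i)).
exists (\prod_i D i); split.
  by apply/prodf_neq0 => i _; case: (hD i).
move=> i; rewrite (bigD1 i) /=; last by [].
rewrite tofracM mulrC mulrA [c i * _]mulrC.
apply: laurentM; first by case: (hD i).
exact: laurent_poly.
Qed.

Section Vec.
Variable n : nat.
Local Notation vec := 'rV[K]_n.

Lemma laurent_vec0 : laurent_vec (0 : vec).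
Proof. move=> i; rewrite mxE; exact: laurent0. Qed.

Lemma laurent_vecD (u v : vec) : laurent_vec u -> laurent_vec v -> laurent_vec (u + v).
Proof. move=> hu hv i; rewrite mxE; exact: laurentD. Qed.

Lemma laurent_vecZ (r : K) (v : vec) : laurent r -> laurent_vec v -> laurent_vec (r *: v).
Proof. move=> hr hv i; rewrite mxE; exact: laurentM. Qed.

Lemma laurent_vecN (v : vec) : laurent_vec v -> laurent_vec (- v).
Proof. move=> hv i; rewrite mxE; exact: laurentN. Qed.

Lemma laurent_vecB (u v : vec) : laurent_vec u -> laurent_vec v -> laurent_vec (u - v).
Proof. move=> hu hv; apply: laurent_vecD; [exact: hu | exact: laurent_vecN]. Qed.

Variable V : vec -> Prop.
Hypothesis hV : is_submodule V.

Lemma subm_vec v : V v -> laurent_vec v.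
Proof. case: hV => h _ _ _; exact: h. Qed.
Lemma subm0 : V 0.
Proof. case: hV => _ h _ _; exact: h. Qed.
Lemma submD u v : V u -> V v -> V (u + v).
Proof. case: hV => _ _ h _; exact: h. Qed.
Lemma submZ r v : laurent r -> V v -> V (r *: v).
Proof. case: hV => _ _ _ h; exact: h. Qed.
Lemma submN v : V v -> V (- v).
Proof. move=> hv; rewrite -scaleN1r; apply: submZ hv; exact: laurentN laurent1. Qed.
Lemma submB u v : V u -> V v -> V (u - v).
Proof. move=> hu hv; apply: submD hu _; exact: submN. Qed.
Lemma subm_sum (I : Type) (r : seq I) (Pr : pred I) (F : I -> vec) :
  (forall i, Pr i -> V (F i)) -> V (\sum_(i <- r | Pr i) F i).
Proof. move=> hF; elim/big_ind: _; [exact: subm0 | exact: submD | exact: hF]. Qed.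

End Vec.



Lemma factor_X (d : P) : d != 0 -> exists a (h : P), h.[0] != 0 /\ d = h * 'X^a.
Proof.
move=> nd; have [a [h hr ed]] := multiplicity_XsubC d 0.
exists a, h; split.
- by move: hr; rewrite nd /=.
- by rewrite ed polyC0 subr0.
Qed.

Lemma residue (h : P) : h.[0] != 0 -> forall f : K, laurent f ->
  exists (r : P) (z : K), (size r < size h)%N /\ laurent z /\ f = r%:F + h%:F * z.
Proof.
move=> h0 f [g [k ->]].
set c := h.[0].
have hroot : root (h - c%:P) 0.
  apply/eqP; rewrite hornerD hornerN hornerC subrr; reflexivity.
case/factor_theorem: hroot => h1 eh1.
rewrite polyC0 subr0 in eh1.
have eh : h = h1 * 'X + c%:P by rewrite -eh1 subrK.
pose q := - (h1 * (c^-1)%:P).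
have key : 1 - 'X * q = h * (c^-1)%:P.
  rewrite /q mulrN opprK eh mulrDl -polyCM mulfV; last exact: h0.
  rewrite polyC1 [RHS]addrC mulrA [_ * h1]mulrC; reflexivity.
pose y := 'X * q.
pose S := \sum_(i < k) 1 ^+ (k.-1 - i) * y ^+ i.
have E1 : 1 - y ^+ k = h * (c^-1)%:P * S by rewrite -key -subrXX expr1n.
have E : g = 'X^k * (g * q ^+ k) + h * (g * (c^-1)%:P * S).
  have -> : h * (g * (c^-1)%:P * S) = g * (1 - y ^+ k).
    rewrite E1 !mulrA [h * g]mulrC; reflexivity.
  rewrite /y exprMn mulrBr mulr1 [X in X + _]mulrCA addrC subrK; reflexivity.
have hnz : h != 0.
  apply/eqP => hz; move: h0; rewrite /c hz horner0 eqxx; done.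
set G := g * q ^+ k.
have EG := divp_eq G h.
exists (G %% h), ((g * (c^-1)%:P * S)%:F / ('X^k)%:F + (G %/ h)%:F); split.
  exact: ltn_modpN0 hnz.
split.
  apply: laurentD; [exists (g * (c^-1)%:P * S), k; reflexivity | exact: laurent_poly].
apply: frac_step; first by rewrite expf_neq0 // polyX_eq0.
rewrite {1}E -EG; reflexivity.
Qed.


Lemma poly_small (r : P) N : (size r <= N)%N -> \poly_(k < N) r`_k = r.
Proof.
move=> hN; apply/polyP => k; rewrite coef_poly.
case: (ltnP k N) => hk; first reflexivity.
rewrite nth_default; first reflexivity.
exact: leq_trans hN hk.
Qed.

Definition rho n (h : P) (t : {ffun 'I_n -> {ffun 'I_(size h) -> 'F_p}}) : 'rV[K]_n :=
  \row_i ((\sum_(k < size h) t i k *: 'X^k)%:F).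

Lemma vec_residue n (h : P) : h.[0] != 0 -> forall v : 'rV[K]_n, laurent_vec v ->
  exists t, exists z, laurent_vec z /\ v = @rho n h t + h%:F *: z.
Proof.
move=> h0 v hv.
have hall : forall i : 'I_n, exists rz : P * K,
    [/\ (size rz.1 < size h)%N, laurent rz.2 & v 0 i = rz.1%:F + h%:F * rz.2].
  move=> i; have [r [z [h1 [h2 h3]]]] := residue h0 (hv i).
  exists (r, z); split; [exact: h1 | exact: h2 | exact: h3].
have [RZ hRZ] := fin_all_exists hall.
exists [ffun i => [ffun k : 'I_(size h) => (RZ i).1`_k]], (\row_i (RZ i).2); split.
  move=> i; rewrite mxE; by case: (hRZ i).
apply/rowP => i; rewrite !mxE.
case: (hRZ i) => hs _ ->.
congr (_ + _).
rewrite -{1}(poly_small (ltnW hs)) poly_def.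
congr (FracField.tofrac _).
apply: eq_bigr => k _; rewrite !ffunE; reflexivity.
Qed.

Section Rank.
Variable n : nat.
Local Notation vec := 'rV[K]_n.

Lemma free_row_free k (u : 'I_k -> vec) :
  (forall c : 'I_k -> K, (forall i, laurent (c i)) ->
     \sum_(i < k) c i *: u i = 0 -> forall i, c i = 0) ->
  row_free (\matrix_i u i).
Proof.
move=> hf; apply: inj_row_free => v hv.
have [d [nd hd]] := denomF (fun i => v 0 i).
have nd' : d%:F != 0 :> K by rewrite tofrac_eq0.
have hs : \sum_(i < k) (d%:F * v 0 i) *: u i = 0.
  transitivity (d%:F *: (v *m \matrix_i u i)); last by rewrite hv scaler0.
  rewrite mulmx_sum_row scaler_sumr; apply: eq_bigr => i _.
  rewrite rowK scalerA; reflexivity.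
have h0 := hf _ hd hs.
apply/rowP => i; rewrite mxE.
move: (h0 i) => /eqP; rewrite mulf_eq0 (negbTE nd') /= => /eqP e; exact: e.
Qed.

Lemma row_free_free k (A : 'M[K]_(k, n)) : row_free A ->
  forall c : 'I_k -> K, \sum_(i < k) c i *: row i A = 0 -> forall i, c i = 0.
Proof.
move=> fA c hc i.
have : (\row_j c j) *m A = 0 *m A.
  rewrite mul0mx mulmx_sum_row -[RHS]hc; apply: eq_bigr => j _; rewrite mxE; reflexivity.
move/(row_free_inj fA) => /rowP /(_ i); rewrite !mxE => e; exact: e.
Qed.

Lemma free0 (V : vec -> Prop) : is_submodule V -> free_family_in V 0.
Proof.
move=> hV; exists (fun _ => 0); split; first by move=> [].
by move=> c _ _ [].
Qed.

Lemma rk_attained (V : vec -> Prop) : is_submodule V ->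
  exists k : 'I_n.+1, free_family_in V k /\ rk V = k.
Proof.
move=> hV; rewrite /rk.
elim/big_ind: _ => [|x y [k1 [h1 ->]] [k2 [h2 ->]]|k hk].
- exists ord0; split; [exact: free0 | reflexivity].
- case: (leqP k1 k2) => h.
  + exists k2; split; [exact: h2 | reflexivity].
  + exists k1; split; [exact: h1 | reflexivity].
- exists k; split; [exact/asboolP | reflexivity].
Qed.

Lemma rk_ge (V : vec -> Prop) k : (k <= n)%N -> free_family_in V k -> (k <= rk V)%N.
Proof.
move=> kn hf.
have kn' : (k < n.+1)%N by rewrite ltnS.
have := @leq_bigmax_cond _ (fun k : 'I_n.+1 => `[< free_family_in V k >])
   (fun k => nat_of_ord k) (Ordinal kn') (asboolT hf).
move=> h; exact: h.
Qed.


Lemma span_rk (V : vec -> Prop) (hV : is_submodule V) r (u : 'I_r -> vec) :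
  (forall i, V (u i)) -> row_free (\matrix_i u i) -> rk V = r ->
  forall w, V w -> (w <= \matrix_i u i)%MS.
Proof.
move=> hu fA hr w hw.
set A := \matrix_i u i.
apply/negPn/negP => nwA.
have fA' : row_free (col_mx A w).
  apply: inj_row_free => v hv.
  rewrite -[v]hsubmxK in hv *.
  rewrite mul_row_col in hv.
  set v1 := lsubmx v in hv *; set v2 := rsubmx v in hv *.
  have e2 : v2 = 0.
    apply/rowP => j; rewrite (ord1 j) [RHS]mxE.
    apply/eqP; apply/negPn/negP => nz.
    apply: (negP nwA).
    have e : v2 *m w = - (v1 *m A).
      apply/eqP; rewrite -addr_eq0 addrC hv; exact: eqxx.
    rewrite [v2]mx11_scalar mul_scalar_mx in e.
    have -> : w = (v2 0 0)^-1 *: (v2 0 0 *: w).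
      rewrite scalerA mulVf; [rewrite scale1r; reflexivity | exact: nz].
    rewrite e scalerN -scaleNr.
    apply: scalemx_sub; exact: submxMl.
  rewrite e2 mul0mx addr0 in hv.
  have e1 : v1 = 0.
    apply: (row_free_inj fA); rewrite hv mul0mx; reflexivity.
  rewrite e1 e2 row_mx0; reflexivity.
have rk' : \rank (col_mx A w) = (r + 1)%N := eqP fA'.
have le : (r + 1 <= n)%N by rewrite -rk'; exact: rank_leq_col.
have ff : free_family_in V (r + 1).
  exists (fun i => row i (col_mx A w)); split.
  - move=> i; rewrite -(splitK i); case: (split i) => j /=.
    + rewrite rowKu rowK; exact: hu.
    + rewrite rowKd.
      have -> : row j w = w by apply/rowP => k; rewrite mxE (ord1 j).
      exact: hw.
  - move=> c _; exact: row_free_free fA' c.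
have := rk_ge le ff; rewrite hr addn1 ltnn; done.
Qed.


Lemma cramer (V : vec -> Prop) (hV : is_submodule V) r (A : 'M[K]_(r, n)) :
  row_free A -> (forall i, V (row i A)) ->
  exists d : P, d != 0 /\
    forall v, laurent_vec v -> (v <= A)%MS -> V (d%:F *: v).
Proof.
move=> fA hA.
have [d [nd hd]] := denomF (fun ij : 'I_n * 'I_r => pinvmx A ij.1 ij.2).
exists d; split; first exact: nd.
move=> v hv sv.
have e : v *m pinvmx A *m A = v := mulmxKpV sv.
set c := v *m (d%:F *: pinvmx A).
have -> : d%:F *: v = c *m A.
  rewrite /c -scalemxAr -scalemxAl e; reflexivity.
rewrite mulmx_sum_row; apply: (subm_sum hV) => i _; apply: (submZ hV); last exact: hA.
rewrite /c mxE; apply: laurent_sum => j _; rewrite mxE.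
  apply: laurentM; [exact: hv | exact: (hd (j, i))].
Qed.
End Rank.

End Laurent.

Theorem lemma6p15 (p n : nat) (U : 'rV[Kfrac p]_n -> Prop)
  (Um : nat -> 'rV[Kfrac p]_n -> Prop) :
  prime p -> (1 <= n)%N ->
  is_submodule U ->
  (forall m, (1 <= m)%N -> is_submodule (Um m)) ->
  (forall m, (1 <= m)%N -> forall v, U v -> Um m v) ->
  (forall m, (1 <= m)%N -> rk U = rk (Um m)) ->
  converges Um U ->
  exists M, forall m, (M <= m)%N -> Um m = U.
Proof.
move=> pp n1 hU hUm hsub hrk hconv.
have [r0 [hfr er]] := rk_attained hU.
case: hfr => u [hu hfree].
set A := \matrix_i u i.
have fA : row_free A := free_row_free hfree.
have spanUm : forall m, (1 <= m)%N -> forall w, Um m w -> (w <= A)%MS.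
  move=> m hm; apply: (span_rk (hUm m hm)) _ fA _.
  - move=> i; exact: (hsub m hm _ (hu i)).
  - rewrite -(hrk m hm); exact: er.
have [d [nd hd]] : exists d : {poly 'F_p}, d != 0 /\
    forall v, laurent_vec v -> (v <= A)%MS -> U (d%:F *: v).
  apply: (cramer hU fA) => i; rewrite rowK; exact: hu.
have [a [h [h0 edh]]] := factor_X nd.
have hS : forall v, laurent_vec v -> (v <= A)%MS -> U (h%:F *: v).
  move=> v hv sv.
  have hXa : (('X : {poly 'F_p}) ^+ a)%:F != 0 :> Kfrac p by exact: tofracX_neq0.
  have -> : h%:F *: v = (((('X : {poly 'F_p}) ^+ a)%:F)^-1) *: (d%:F *: v).
    rewrite scalerA edh tofracM mulrCA mulVf; last exact: hXa.
    rewrite mulr1; reflexivity.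
  apply: (submZ hU); [exact: laurentXV | exact: hd].
pose Cl (t : {ffun 'I_n -> {ffun 'I_(size h) -> 'F_p}}) (w : 'rV[Kfrac p]_n) :=
  exists z, laurent_vec z /\ w = @rho p n h t + h%:F *: z.
have hMt : forall t, exists Mt, forall m, (1 <= m)%N -> (Mt <= m)%N ->
    forall w, Um m w -> Cl t w -> U w.
  move=> t; case: (pselect (exists v, [/\ laurent_vec v, (v <= A)%MS, ~ U v & Cl t v])).
  - move=> [v [hv sv nUv [zv [hzv ev]]]].
    have [M hM] := hconv v hv.
    exists M => m hm hMm w hw [zw [hzw ew]]; exfalso; apply: nUv.
    have sw := spanUm m hm w hw.
    pose z := zw - zv.
    have ewv : w - v = h%:F *: z.
      rewrite ew ev /z scalerBr opprD addrACA subrr add0r; reflexivity.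
    have hzl : laurent_vec z := laurent_vecB hzw hzv.
    have swv : (w - v <= A)%MS.
      apply: addmx_sub; first exact: sw.
      rewrite -scaleN1r; exact: scalemx_sub sv.
    have hnz : h%:F != 0 :> Kfrac p.
      rewrite tofrac_eq0; apply/eqP => hz; move: h0; rewrite hz horner0 eqxx; done.
    have sz : (z <= A)%MS.
      have -> : z = (h%:F)^-1 *: (w - v).
        rewrite ewv scalerA mulVf; last exact: hnz.
        rewrite scale1r; reflexivity.
      exact: scalemx_sub swv.
    have Uwv : U (w - v) by rewrite ewv; apply: hS; [exact: hzl | exact: sz].
    have Umv : Um m v.
      have -> : v = w - (w - v) by rewrite opprB addrC subrK.
      apply: (submB (hUm m hm)); first exact: hw.
      exact: (hsub m hm _ Uwv).
    exact: (proj1 (hM m hMm) Umv).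
  - move=> hno; exists 0%N => m hm _ w hw hcl.
    case: (pselect (U w)) => [//|nUw]; exfalso; apply: hno; exists w; split.
    + exact: (subm_vec (hUm m hm) hw).
    + exact: (spanUm m hm w hw).
    + exact: nUw.
    + exact: hcl.
have [Mf hMf] := fin_all_exists hMt.
exists (maxn 1 (\max_t Mf t)) => m hm.
have hm1 : (1 <= m)%N := leq_trans (leq_maxl _ _) hm.
apply: funext => w; apply: propext; split.
- move=> hw; have hwl := subm_vec (hUm m hm1) hw.
  have [t [z [hz ew]]] := vec_residue h0 hwl.
  apply: (hMf t m hm1 _ w hw).
  + exact: leq_trans (leq_bigmax t) (leq_trans (leq_maxr _ _) hm).
  + exists z; split; [exact: hz | exact: ew].
- move=> hw; exact: (hsub m hm1 w hw).
Qed.
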